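(* Let $E$ and $F$ be infinite dimensional Archimedean Riesz spaces. Then the free product $\mathcal{B}(E)\otimes\mathcal{B}(F)$ is not Boolean isomorphic to $\mathcal{B}(E\bar{\otimes}F)$.
   Context: For an Archimedean Riesz space $E$, $\mathcal{B}(E)$ is the set of all bands of $E$ ordered by inclusion; it is a Boolean algebra. $E\bar{\otimes}F$ is Fremlin's Archimedean Riesz space tensor product: the Archimedean Riesz space $G$ with a Riesz bimorphism $\otimes\colon E\times F\to G$ such that every Riesz bimorphism from $E\times F$ into an Archimedean Riesz space $H$ factors as $T\circ\otimes$ for a unique Riesz homomorphism $T\colon G\to H$. The free product $\mathcal{A}\otimes\mathcal{B}$ of Boolean algebras is the Boolean algebra of open-and-closed subsets of $Z_1\times Z_2$ (product topology), where $Z_1,Z_2$ are the Stone spaces of $\mathcal{A},\mathcal{B}$. *)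

(* Defs.v *)
From HB Require Import structures.
From mathcomp Require Import all_boot all_order all_algebra.
From mathcomp Require Import boolp classical_sets.
From mathcomp Require Import Rstruct.
From Stdlib Require Import Reals.

Set Implicit Arguments.
Unset Strict Implicit.
Unset Printing Implicit Defensive.

Import Order.TTheory GRing.Theory Num.Theory.
Local Open Scope ring_scope.
Local Open Scope classical_set_scope.

Record riesz := Riesz {
  rcar :> lmodType R;
  rle : rcar -> rcar -> Prop;
  rjoin : rcar -> rcar -> rcar;
  rle_refl : forall x, rle x x;
  rle_anti : forall x y, rle x y -> rle y x -> x = y;
  rle_trans : forall x y z, rle x y -> rle y z -> rle x z;
  rle_add : forall x y z, rle x y -> rle (x + z) (y + z);
  rle_scale : forall (a : R) x y, 0 <= a -> rle x y -> rle (a *: x) (a *: y);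
  rjoin_ubl : forall x y, rle x (rjoin x y);
  rjoin_ubr : forall x y, rle y (rjoin x y);
  rjoin_lub : forall x y z, rle x z -> rle y z -> rle (rjoin x y) z
}.

Section RieszDefs.
Variable E : riesz.

Definition rmeet (x y : E) : E := - rjoin (- x) (- y).
Definition rabs (x : E) : E := rjoin x (- x).
Definition rdisj (x y : E) : Prop := rmeet (rabs x) (rabs y) = 0.

Definition dcompl (A : set E) : set E := [set x | forall y, A y -> rdisj x y].

Definition is_ideal (A : set E) : Prop :=
  A 0 /\ (forall x y, A x -> A y -> A (x + y)) /\
  (forall (a : R) x, A x -> A (a *: x)) /\
  (forall x y, A y -> rle (rabs x) (rabs y) -> A x).

Definition is_sup (D : set E) (s : E) : Prop :=
  (forall d, D d -> rle d s) /\
  (forall u, (forall d, D d -> rle d u) -> rle s u).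

Definition is_band (A : set E) : Prop :=
  is_ideal A /\ (forall D s, D `<=` A -> is_sup D s -> A s).

Definition archimedean : Prop :=
  forall x y : E, rle 0 x -> (forall n : nat, rle (n%:R *: x) y) -> x = 0.

Definition infinite_dim : Prop :=
  forall n : nat, exists v : 'I_n -> E,
    forall c : 'I_n -> R, \sum_(i < n) c i *: v i = 0 -> forall i, c i = 0.

(* ultrafilters of the Boolean algebra B(E) (bands ordered by inclusion;
   bottom {0}, top E, meet = intersection, complement = disjoint complement) *)
Definition is_ultra (U : set (set E)) : Prop :=
  (forall A, U A -> is_band A) /\ U setT /\ ~ U [set 0] /\
  (forall A B, U A -> U B -> U (A `&` B)) /\
  (forall A B, U A -> is_band B -> A `<=` B -> U B) /\
  (forall A, is_band A -> U A \/ U (dcompl A)).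

Definition stone := {U : set (set E) | is_ultra U}.

End RieszDefs.

Definition linear_map (E G : riesz) (T : E -> G) : Prop :=
  (forall x y, T (x + y) = T x + T y) /\ (forall (a : R) x, T (a *: x) = a *: T x).

Definition riesz_hom (E G : riesz) (T : E -> G) : Prop :=
  linear_map T /\ (forall x y, T (rjoin x y) = rjoin (T x) (T y)).

Definition riesz_bimorphism (E F G : riesz) (phi : E -> F -> G) : Prop :=
  (forall x, linear_map (phi x)) /\ (forall y, linear_map (fun x => phi x y)) /\
  (forall x, rle 0 x -> riesz_hom (phi x)) /\
  (forall y, rle 0 y -> riesz_hom (fun x => phi x y)).

Definition fremlin_tensor (E F G : riesz) (tens : E -> F -> G) : Prop :=
  archimedean G /\ riesz_bimorphism tens /\
  forall (H : riesz), archimedean H -> forall phi : E -> F -> H,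
    riesz_bimorphism phi ->
    (exists T : G -> H, riesz_hom T /\ forall x y, phi x y = T (tens x y)) /\
    (forall T1 T2 : G -> H, riesz_hom T1 -> riesz_hom T2 ->
       (forall x y, phi x y = T1 (tens x y)) ->
       (forall x y, phi x y = T2 (tens x y)) -> forall z, T1 z = T2 z).

(* Open subsets of the product Z1 x Z2 of the Stone spaces: the sets
   {U | a \in U}, a a band, form a base of the Stone topology, so the
   rectangles of such sets form a base of the product topology. *)
Definition prod_open (E F : riesz) (W : set (stone E * stone F)) : Prop :=
  forall p, W p -> exists (A : set E) (B : set F),
    is_band A /\ is_band B /\ proj1_sig p.1 A /\ proj1_sig p.2 B /\
    forall q : stone E * stone F, proj1_sig q.1 A -> proj1_sig q.2 B -> W q.

(* elements of the free product B(E) (x) B(F): clopen subsets of Z1 x Z2 *)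
Definition prod_clopen (E F : riesz) (W : set (stone E * stone F)) : Prop :=
  prod_open W /\ prod_open (~` W).

(* f is a Boolean isomorphism from the free product B(E) (x) B(F)
   (clopen sets, with intersection/union/complement) onto B(G)
   (bands, with meet A /\ B = A `&` B, join (A `|` B)^dd, complement A^d). *)
Definition boolean_iso (E F G : riesz) (f : set (stone E * stone F) -> set G) : Prop :=
  (forall W, prod_clopen W -> is_band (f W)) /\
  (forall B, is_band B -> exists W, prod_clopen W /\ f W = B) /\
  (forall W1 W2, prod_clopen W1 -> prod_clopen W2 -> f W1 = f W2 -> W1 = W2) /\
  (forall W1 W2, prod_clopen W1 -> prod_clopen W2 -> f (W1 `&` W2) = f W1 `&` f W2) /\
  (forall W1 W2, prod_clopen W1 -> prod_clopen W2 ->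
     f (W1 `|` W2) = dcompl (dcompl (f W1 `|` f W2))) /\
  (forall W, prod_clopen W -> f (~` W) = dcompl (f W)).

(* Main.v *)
Require Import Defs.
From HB Require Import structures.
From mathcomp Require Import all_boot all_order all_algebra.
From mathcomp Require Import boolp classical_sets Rstruct reals.
From mathcomp Require Import ring lra.
From Stdlib Require Import Reals.
Import Order.TTheory GRing.Theory Num.Theory.
Set Implicit Arguments.
Unset Strict Implicit.
Unset Printing Implicit Defensive.
Local Open Scope ring_scope.
Local Open Scope classical_set_scope.
From mathcomp Require Import zify.
Lemma half_half (K : realFieldType) : (2:K)^-1 + 2^-1 = 1.
Proof. lra. Qed.

Section Basics.
Variable E : riesz.
Implicit Types x y z u v w : E.
Local Notation "x <=: y" := (@rle E x y) (at level 70).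

Lemma le_tr y x z : x <=: y -> y <=: z -> x <=: z.
Proof. exact: rle_trans. Qed.

Lemma le_addr x y z : x <=: y -> x + z <=: y + z.
Proof. exact: rle_add. Qed.

Lemma le_addl x y z : x <=: y -> z + x <=: z + y.
Proof. by move=> h; rewrite ![z + _]addrC; apply: rle_add. Qed.

Lemma le_addr2 x y z : x + z <=: y + z -> x <=: y.
Proof. by move=> /(rle_add (-z)); rewrite !addrK. Qed.

Lemma le_add x y x' y' : x <=: y -> x' <=: y' -> x + x' <=: y + y'.
Proof. by move=> h1 h2; apply: (le_tr (y:=y + x')); [apply: le_addr|apply: le_addl]. Qed.

Lemma le_opp x y : x <=: y -> -y <=: -x.
Proof.
move=> /(rle_add (-x - y)).
by rewrite addrA subrr add0r addrCA subrr addr0.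
Qed.

Lemma le_oppE x y : -y <=: -x -> x <=: y.
Proof. by move=> /le_opp; rewrite !opprK. Qed.

Lemma le_subr0 x y : x <=: y -> 0 <=: y - x.
Proof. by move=> /(rle_add (-x)); rewrite subrr. Qed.

Lemma le_subr0E x y : 0 <=: y - x -> x <=: y.
Proof. by move=> /(rle_add x); rewrite add0r subrK. Qed.

Lemma joinC x y : rjoin x y = rjoin y x.
Proof. by apply: rle_anti; apply: rjoin_lub; first [exact: rjoin_ubl|exact: rjoin_ubr]. Qed.

Lemma le_joinl x y z : x <=: y -> x <=: rjoin y z.
Proof. by move=> h; apply: le_tr h (rjoin_ubl _ _). Qed.
Lemma le_joinr x y z : x <=: z -> x <=: rjoin y z.
Proof. by move=> h; apply: le_tr h (rjoin_ubr _ _). Qed.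

Lemma joinD x y z : rjoin x y + z = rjoin (x + z) (y + z).
Proof.
apply: rle_anti; last first.
  by apply: rjoin_lub; apply: le_addr; [apply: rjoin_ubl|apply: rjoin_ubr].
apply: (le_addr2 (z := -z)); rewrite addrK; apply: rjoin_lub.
  by have := le_addr (-z) (rjoin_ubl (x + z) (y + z)); rewrite addrK.
by have := le_addr (-z) (rjoin_ubr (x + z) (y + z)); rewrite addrK.
Qed.

Lemma le_scale (a : R) x y : 0 <= a -> x <=: y -> a *: x <=: a *: y.
Proof. exact: rle_scale. Qed.

Lemma joinZ (a : R) x y : 0 < a -> a *: rjoin x y = rjoin (a *: x) (a *: y).
Proof.
move=> a0; apply: rle_anti; last first.
  by apply: rjoin_lub; apply: le_scale; first [exact: ltW|exact: rjoin_ubl|exact: rjoin_ubr].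
have ha : a^-1 * a = 1 by rewrite mulVf // gt_eqF.
have hb : 0 <= a^-1 by rewrite invr_ge0 ltW.
have hc : a * a^-1 = 1 by rewrite mulfV // gt_eqF.
rewrite -[rjoin (a *: x) _]scale1r -hc -scalerA; apply: le_scale; first exact: ltW.
apply: rjoin_lub.
  by have := le_scale hb (rjoin_ubl (a *: x) (a *: y)); rewrite scalerA ha scale1r.
by have := le_scale hb (rjoin_ubr (a *: x) (a *: y)); rewrite scalerA ha scale1r.
Qed.

Lemma meet_lel x y : rmeet x y <=: x.
Proof. by apply: le_oppE; rewrite /rmeet opprK; apply: rjoin_ubl. Qed.
Lemma meet_ler x y : rmeet x y <=: y.
Proof. by apply: le_oppE; rewrite /rmeet opprK; apply: rjoin_ubr. Qed.
Lemma meet_glb x y z : z <=: x -> z <=: y -> z <=: rmeet x y.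
Proof.
move=> h1 h2; apply: le_oppE; rewrite /rmeet opprK.
by apply: rjoin_lub; apply: le_opp.
Qed.
Lemma meetC x y : rmeet x y = rmeet y x.
Proof. by rewrite /rmeet joinC. Qed.
Lemma meetD x y z : rmeet x y + z = rmeet (x + z) (y + z).
Proof.
rewrite /rmeet -[z]opprK -opprD joinD !opprD !opprK.
by [].
Qed.
Lemma meet_mono x x' y : x <=: x' -> rmeet x y <=: rmeet x' y.
Proof.
move=> h; apply: meet_glb; last exact: meet_ler.
exact: le_tr (meet_lel _ _) h.
Qed.
Lemma meet_ge0 x y : 0 <=: x -> 0 <=: y -> 0 <=: rmeet x y.
Proof. exact: meet_glb. Qed.
Lemma meet_id x : rmeet x x = x.
Proof. by apply: rle_anti; [apply: meet_lel|apply: meet_glb; apply: rle_refl]. Qed.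

Lemma join_meet x y : rjoin x y + rmeet x y = x + y.
Proof.
rewrite /rmeet; have h : rjoin (-x) (-y) + (x + y) = rjoin x y.
  rewrite joinD.
  have -> : - x + (x + y) = y by rewrite addrA addNr add0r.
  have -> : - y + (x + y) = x by rewrite addrC -addrA addrN addr0.
  by rewrite joinC.
by rewrite -{1}h addrC addKr.
Qed.

Lemma abs_gex x : x <=: rabs x.
Proof. exact: rjoin_ubl. Qed.
Lemma abs_gexN x : - x <=: rabs x.
Proof. exact: rjoin_ubr. Qed.

Lemma half_pos x : 0 <=: x + x -> 0 <=: x.
Proof.
move=> h; have h2 : 0 <= 2^-1 :> R by rewrite invr_ge0 ler0n.
have := le_scale h2 h; rewrite scaler0 scalerDr -scalerDl.
rewrite half_half.
by rewrite scale1r.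
Qed.

Lemma abs_ge0 x : 0 <=: rabs x.
Proof.
apply: half_pos; rewrite -(subrr x); apply: le_add; [exact: abs_gex|exact: abs_gexN].
Qed.

Lemma ge0_opp_le x : 0 <=: x -> - x <=: x.
Proof. by move=> h; apply: (le_tr (y:=0)); first (rewrite -oppr0; apply: le_opp). Qed.

Lemma abs_pos x : 0 <=: x -> rabs x = x.
Proof.
move=> h; apply: rle_anti; last exact: abs_gex.
by apply: rjoin_lub; [apply: rle_refl|apply: ge0_opp_le].
Qed.

Lemma abs_abs x : rabs (rabs x) = rabs x.
Proof. exact/abs_pos/abs_ge0. Qed.

Lemma abs_opp x : rabs (- x) = rabs x.
Proof. by rewrite /rabs opprK joinC. Qed.

Lemma abs0 : rabs (0 : E) = 0.
Proof. by apply: abs_pos; apply: rle_refl. Qed.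

Lemma abs_eq0 x : rabs x = 0 -> x = 0.
Proof.
move=> h; apply: rle_anti.
  by rewrite -h; apply: abs_gex.
by apply: le_oppE; rewrite oppr0 -h; apply: abs_gexN.
Qed.

Lemma abs_tri x y : rabs (x + y) <=: rabs x + rabs y.
Proof.
apply: rjoin_lub; first by apply: le_add; apply: abs_gex.
by rewrite opprD; apply: le_add; apply: abs_gexN.
Qed.

Lemma abs_scale (a : R) x : rabs (a *: x) = `|a| *: rabs x.
Proof.
have hp : forall b : R, 0 <= b -> rabs (b *: x) = b *: rabs x.
  move=> b; rewrite le_eqVlt => /orP[/eqP <-|b0].
    by rewrite !scale0r abs0.
  by rewrite /rabs joinZ // scalerN.
have [a0|a0] := leP 0 a; first by rewrite ger0_norm // hp.
rewrite ltr0_norm // -abs_opp -scaleNr hp ?oppr_ge0 ?ltW //.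
Qed.

Definition pos x := rjoin x 0.
Lemma pos_ge0 x : 0 <=: pos x.
Proof. exact: rjoin_ubr. Qed.
Lemma pos_gex x : x <=: pos x.
Proof. exact: rjoin_ubl. Qed.
Lemma pos_mono x y : x <=: y -> pos x <=: pos y.
Proof. by move=> h; apply: rjoin_lub; [apply: le_tr h (pos_gex _)|apply: pos_ge0]. Qed.
Lemma pos_le_abs x : pos x <=: rabs x.
Proof. by apply: rjoin_lub; [apply: abs_gex|apply: abs_ge0]. Qed.
Lemma sub_meet a v : a - rmeet a v = pos (a - v).
Proof.
rewrite /rmeet opprK addrC joinD addNr /pos joinC.
by rewrite addrC.
Qed.

Lemma meet_subadd a b c : 0 <=: a -> 0 <=: b -> 0 <=: c ->
  rmeet (a + b) c <=: rmeet a c + rmeet b c.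
Proof.
move=> a0 b0 c0; rewrite meetD; apply: meet_glb.
  rewrite [a + rmeet b c]addrC meetD; apply: meet_glb.
    by rewrite addrC; apply: meet_lel.
  apply: (le_tr (y:=c)); first exact: meet_ler.
  by rewrite -{1}[c]addr0; apply: le_addl.
apply: (le_tr (y:=c)); first exact: meet_ler.
by rewrite -{1}[c]addr0; apply: le_addl; apply: meet_ge0.
Qed.

Lemma meetZ (a : R) x y : 0 < a -> a *: rmeet x y = rmeet (a *: x) (a *: y).
Proof. by move=> a0; rewrite /rmeet scalerN joinZ // !scalerN. Qed.

Lemma scale_ge0 (a : R) x : 0 <= a -> 0 <=: x -> 0 <=: a *: x.
Proof. by move=> a0 x0; have := le_scale a0 x0; rewrite scaler0. Qed.

Lemma meet_scale_disj (t : R) p q : 0 <= t -> 0 <=: p -> 0 <=: q ->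
  rmeet p q = 0 -> rmeet (t *: p) q = 0.
Proof.
move=> t0 p0 q0 h; apply: rle_anti; last first.
  by apply: meet_ge0 => //; apply: scale_ge0.
have [t1|t1] := leP t 1.
  rewrite -h; apply: meet_mono; apply: le_subr0E.
  by rewrite -{1}[p]scale1r -scalerBl; apply: scale_ge0; first by rewrite subr_ge0.
have ht : 0 < t by apply: lt_trans t1.
rewrite -(scaler0 _ t) -h meetZ //; rewrite meetC [X in _ <=: X]meetC.
apply: meet_mono; apply: le_subr0E.
rewrite -{2}[q]scale1r -scalerBl; apply: scale_ge0 => //.
by rewrite subr_ge0 ltW.
Qed.
End Basics.
Section Bands.
Variable E : riesz.
Implicit Types x y z u v w : E.
Implicit Types A B P Q : set E.
Local Notation "x <=: y" := (@rle E x y) (at level 70).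

Lemma rdisjC x y : rdisj x y -> rdisj y x.
Proof. by rewrite /rdisj meetC. Qed.

Lemma disj_solid x y w : rabs x <=: rabs y -> rdisj y w -> rdisj x w.
Proof.
move=> h d; apply: rle_anti; last by apply: meet_ge0; apply: abs_ge0.
by rewrite -d; apply: meet_mono.
Qed.

Lemma disj_add x y w : rdisj x w -> rdisj y w -> rdisj (x + y) w.
Proof.
move=> d1 d2; apply: rle_anti; last by apply: meet_ge0; apply: abs_ge0.
apply: (le_tr (y := rmeet (rabs x + rabs y) (rabs w))).
  by apply: meet_mono; apply: abs_tri.
rewrite -[0](addr0 0) -{1}d1 -d2; apply: meet_subadd; exact: abs_ge0.
Qed.

Lemma disj_scale (a : R) x w : rdisj x w -> rdisj (a *: x) w.
Proof.
move=> d; rewrite /rdisj abs_scale; apply: meet_scale_disj => //; exact: abs_ge0.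
Qed.

Lemma disj0 w : rdisj 0 w.
Proof.
rewrite /rdisj abs0; apply: rle_anti; first exact: meet_lel.
by apply: meet_ge0; [apply: rle_refl|apply: abs_ge0].
Qed.

Lemma disj_self x : rdisj x x -> x = 0.
Proof. by rewrite /rdisj meet_id; apply: abs_eq0. Qed.

Lemma disj_abs x w : rdisj (rabs x) w -> rdisj x w.
Proof. by rewrite /rdisj abs_abs. Qed.

Lemma disj_absE x w : rdisj x w -> rdisj (rabs x) w.
Proof. by rewrite /rdisj abs_abs. Qed.

Lemma ideal0 A : is_ideal A -> A 0.
Proof. by case. Qed.

Lemma band0 A : is_band A -> A 0.
Proof. by case=> [[]]. Qed.

Lemma trivial_of_least s : (forall u, s <=: u) -> forall x : E, x = 0.
Proof.
move=> h x; apply: rle_anti.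
  have := h (s - x); move/le_subr0; rewrite addrAC subrr add0r => h1.
  by apply: le_oppE; rewrite oppr0.
by have := h (s + x); move/le_subr0; rewrite addrC addKr.
Qed.

Lemma dcompl_sup A D s : D `<=` dcompl A -> is_sup D s -> dcompl A s.
Proof.
move=> DA [ub lub] y Ay.
have [[d0 Dd0]|nD] := pselect (exists d, D d); last first.
  have triv := trivial_of_least (s := s).
  have : forall u, s <=: u.
    move=> u; apply: lub => d Dd; exfalso; apply: nD; by exists d.
  move=> /triv t; rewrite (t s); exact: disj0.
set v := rabs y.
have dn : rdisj (pos (- s)) y.
  apply: (disj_solid (y := d0)); last exact: DA _ Dd0 _ Ay.
  rewrite abs_pos; last exact: pos_ge0.
  apply: (le_tr (y := pos (- d0))); first by apply: pos_mono; apply: le_opp; apply: ub.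
  by rewrite -abs_opp; apply: pos_le_abs.
have key : forall a, 0 <=: a -> rdisj a y -> a = pos (a - v).
  move=> a a0 da; rewrite -sub_meet.
  by move: da; rewrite /rdisj abs_pos // => ->; rewrite subr0.
have dp : rdisj (pos s) y.
  set m := pos (pos s - v).
  have hm : forall d, D d -> d <=: m.
    move=> d Dd; apply: (le_tr (y := pos d)); first exact: pos_gex.
    rewrite (key (pos d)); first last.
    - apply: (disj_solid (y := d)); last exact: DA _ Dd _ Ay.
      by rewrite (abs_pos (pos_ge0 d)); exact: pos_le_abs.
    - exact: pos_ge0.
    by apply: pos_mono; apply: le_addr; apply: pos_mono; apply: ub.
  have sm : pos s <=: m.
    by apply: rjoin_lub; [apply: lub|apply: pos_ge0].
  move: sm; rewrite /m -sub_meet => sm.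
  rewrite /rdisj abs_pos; last exact: pos_ge0.
  apply: rle_anti; last by apply: meet_ge0; [apply: pos_ge0|apply: abs_ge0].
  have := le_subr0 sm; rewrite addrAC subrr add0r => h0.
  by apply: le_oppE; rewrite oppr0.
apply: (disj_solid (y := pos s + pos (- s))); last exact: disj_add.
rewrite [X in _ <=: X]abs_pos; last by rewrite -[0]addr0; apply: le_add; apply: pos_ge0.
apply: rjoin_lub.
  apply: (le_tr (y := pos s)); first exact: pos_gex.
  by rewrite -{1}[pos s]addr0; apply: le_addl; apply: pos_ge0.
apply: (le_tr (y := pos (- s))); first exact: pos_gex.
by rewrite -{1}[pos (- s)]add0r; apply: le_addr; apply: pos_ge0.
Qed.

Lemma band_dcompl A : is_band (dcompl A).
Proof.
split; last exact: dcompl_sup.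
split; first by move=> y _; apply: disj0.
split; first by move=> x y hx hy z Az; apply: disj_add; [apply: hx|apply: hy].
split; first by move=> a x hx z Az; apply: disj_scale; apply: hx.
by move=> x y hy hxy z Az; apply: (disj_solid hxy); apply: hy.
Qed.

Lemma band_setT : is_band (@setT E).
Proof. by split=> //; split=> //. Qed.

Lemma band_bigcap (Fam : set (set E)) :
  (forall B, Fam B -> is_band B) -> is_band (fun x => forall B, Fam B -> B x).
Proof.
move=> hF; split; last first.
  by move=> D s DA hs B FB; apply: (hF B FB).2 _ _ _ hs => d Dd; apply: DA.
split; first by move=> B FB; apply: band0; apply: hF.
split; first by move=> x y hx hy B FB; case: (hF B FB) => [[_ [h _]] _]; apply: h; [apply: hx|apply: hy].
split; first by move=> a x hx B FB; case: (hF B FB) => [[_ [_ [h _]]] _]; apply: h; apply: hx.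
by move=> x y hy hxy B FB; case: (hF B FB) => [[_ [_ [_ h]]] _]; apply: h hxy; apply: hy.
Qed.

Lemma band_setI A B : is_band A -> is_band B -> is_band (A `&` B).
Proof.
move=> hA hB.
have -> : A `&` B = (fun x => forall C, [set A; B] C -> C x).
  apply/funext => x; apply/propext; split.
    by move=> [? ?] C [->|->].
  by move=> h; split; apply: h; [left|right].
by apply: band_bigcap => C [->|->].
Qed.

Lemma band_set0 : is_band [set (0 : E)].
Proof.
have -> : [set (0 : E)] = dcompl setT.
  apply/funext => x; apply/propext; split.
    by move=> -> y _; apply: disj0.
  by move=> h; apply: disj_self; apply: h.
exact: band_dcompl.
Qed.

Lemma band_key P A : is_band P -> is_band A -> P `&` A `<=` [set 0] -> P `<=` dcompl A.
Proof.
move=> [[_ [_ [_ sP]]] _] [[_ [_ [_ sA]]] _] h x Px y Ay.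
have m0 : 0 <=: rmeet (rabs x) (rabs y) by apply: meet_ge0; apply: abs_ge0.
apply: h; split.
  by apply: (sP _ x Px); rewrite (abs_pos m0); apply: meet_lel.
by apply: (sA _ y Ay); rewrite (abs_pos m0); apply: meet_ler.
Qed.

Lemma cap_dcompl A : A `&` dcompl A `<=` [set 0].
Proof. by move=> x [Ax hx]; apply: disj_self; apply: hx. Qed.

Definition pband y : set E := dcompl (dcompl [set y]).

Lemma pband_band y : is_band (pband y).
Proof. exact: band_dcompl. Qed.

Lemma pband_in y : pband y y.
Proof. by move=> z hz; apply: rdisjC; apply: hz. Qed.

Lemma pband_disj y z : rdisj y z -> pband y `&` pband z `<=` [set 0].
Proof.
move=> d w [hy hz]; apply: disj_self.
have zin : dcompl [set y] z by move=> _ ->; exact: rdisjC d.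
have wz : rdisj w z := hy z zin.
have win : dcompl [set z] w by move=> _ ->; exact: wz.
exact: (hz w win).
Qed.
End Bands.
Section Ultra.
Variables (T : Type) (Bd : set (set T)) (bot : set T) (cmp : set T -> set T).
Hypotheses (hBT : Bd setT) (hBI : forall A B, Bd A -> Bd B -> Bd (A `&` B))
  (hkey : forall P A, Bd P -> Bd A -> P `&` A `<=` bot -> P `<=` cmp A)
  (hBc : forall A, Bd A -> Bd (cmp A)).

Definition isfilt (U : set (set T)) :=
  U `<=` Bd /\ U setT /\ ~ U bot /\ (forall A B, U A -> U B -> U (A `&` B)) /\
  (forall A B, U A -> Bd B -> A `<=` B -> U B).

Lemma ultra_ext F0 : isfilt F0 ->
  exists U, isfilt U /\ F0 `<=` U /\ forall A, Bd A -> U A \/ U (cmp A).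
Proof.
move=> hF0.
pose PP := fun X : set (set T) => X = set0 \/ (isfilt X /\ F0 `<=` X).
have chain : forall Fam : set (set (set T)), Fam `<=` PP -> total_on Fam subset ->
    PP (\bigcup_(X in Fam) X).
  move=> Fam FP tot.
  have [[X0 [FX0 nX0]]|none] := pselect (exists X, Fam X /\ X <> set0); last first.
    left; apply/funext => A; apply/propext; split => //.
    move=> [X FX XA]; apply: none; exists X; split => // e; by rewrite e in XA.
  have filt : forall X, Fam X -> forall A, X A -> isfilt X.
    move=> X FX A XA; case: (FP X FX) => [e|[]//]; by rewrite e in XA.
  have [fX0 F0X0] : isfilt X0 /\ F0 `<=` X0.
    by case: (FP X0 FX0) => // e; exfalso; apply: nX0.
  right; split; last by move=> A /F0X0 h; exists X0.
  split; first by move=> A [X FX XA]; case: (filt X FX A XA) => h _; apply: h.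
  split; first by exists X0 => //; case: fX0 => _ [].
  split; first by move=> [X FX XA]; case: (filt X FX _ XA) => _ [_ []].
  split.
    move=> A B [X FX XA] [Y FY YB].
    have [XY|YX] := tot X Y FX FY.
      exists Y => //; case: (filt Y FY _ YB) => _ [_ [_ [h _]]]; apply: h => //.
      exact: XY.
    exists X => //; case: (filt X FX _ XA) => _ [_ [_ [h _]]]; apply: h => //.
    exact: YX.
  move=> A B [X FX XA] BB AB; exists X => //.
  by case: (filt X FX _ XA) => _ [_ [_ [_ h]]]; apply: h XA BB AB.
have [U [PU maxU]] := Zorn_bigcup chain.
have [fU F0U] : isfilt U /\ F0 `<=` U.
  case: PU => // e; exfalso; apply: (maxU F0); last by right; split.
  rewrite e; split => //; move=> /(_ setT); apply; case: hF0 => _ []; by [].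
exists U; split => //; split => // C BC.
have [[P [UP PC]]|nP] := pselect (exists P, U P /\ P `&` C `<=` bot).
  right; case: fU => sB [_ [_ [_ up]]]; apply: (up P) => //; first exact: hBc.
  by apply: hkey => //; apply: sB.
pose U' := fun B => Bd B /\ exists P, U P /\ P `&` C `<=` B.
have UU' : U `<=` U'.
  move=> B UB; split; first by case: fU => h _; apply: h.
  by exists B; split => // x [].
have fU' : isfilt U'.
  case: fU => sB [UT [Ubot [UI Uup]]].
  split; first by move=> B [].
  split; first exact: UU'.
  split; first by move=> [_ [P [UP PC]]]; apply: nP; exists P.
  split.
    move=> A B [BA [P1 [U1 h1]]] [BB [P2 [U2 h2]]]; split; first exact: hBI.
    exists (P1 `&` P2); split; first exact: UI.
    by move=> x [[x1 x2] xc]; split; [apply: h1|apply: h2].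
  move=> A B [BA [P [UP h]]] BB AB; split => //; exists P; split => //.
  by move=> x hx; apply: AB; apply: h.
have [e|ne] := pselect (U = U').
  left; rewrite e; split => //; exists setT; split; first by case: fU => _ [].
  by move=> x [].
exfalso; apply: (maxU U'); last by right; split => //; apply: subset_trans UU'.
split => // h; apply: ne; apply/funext => B; apply/propext; split; [apply: UU'|apply: h].
Qed.
End Ultra.

Section BandUltra.
Variable E : riesz.

Lemma exists_ultra (A : set E) : is_band A -> (exists x, A x /\ x <> 0) ->
  exists U : stone E, proj1_sig U A.
Proof.
move=> bA [x0 [Ax0 x00]].
have hkey : forall P A : set E, is_band P -> is_band A -> P `&` A `<=` [set 0] -> P `<=` dcompl A.
  by move=> P B; apply: band_key.
pose F0 := fun B => is_band B /\ A `<=` B.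
have fF0 : isfilt (@is_band E) [set 0] F0.
  split; first by move=> B [].
  split; first by split => //; apply: band_setT.
  split; first by move=> [_ h]; apply: x00; apply: h.
  split; first by move=> B C [bB hB] [bC hC]; split; [apply: band_setI|move=> y Ay; split; [apply: hB|apply: hC]].
  by move=> B C [bB hB] bC BC; split => //; apply: subset_trans BC.
have [U [[sB [UT [Ubot [UI Uup]]]] [F0U dich]]] :=
  ultra_ext (@band_setI E) hkey (fun A _ => @band_dcompl E A) fF0.
have uU : is_ultra U := conj sB (conj UT (conj Ubot (conj UI (conj Uup dich)))).
by exists (exist _ U uU); apply: F0U; split.
Qed.
End BandUltra.

Lemma nat_ultra : exists UU : set (set nat),
  isfilt setT set0 UU /\ (forall S : set nat, (exists N, forall n, leq N n -> S n) -> UU S) /\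
  forall S, UU S \/ UU (~` S).
Proof.
pose F0 := fun S : set nat => exists N, forall n, leq N n -> S n.
have hkey : forall P A : set nat, setT P -> setT A -> P `&` A `<=` set0 -> P `<=` ~` A.
  by move=> P A _ _ h x Px Ax; apply: (h x).
have fF0 : isfilt setT set0 F0.
  split => //; split; first by exists 0%N.
  split; first by move=> [N h]; apply: (h N).
  split; first by move=> A B [N1 h1] [N2 h2]; exists (maxn N1 N2) => n hn; split;
    [apply: h1; apply: leq_trans hn; apply: leq_maxl|apply: h2; apply: leq_trans hn; apply: leq_maxr].
  by move=> A B [N h] _ AB; exists N => n /h; apply: AB.
have [U [fU [F0U dich]]] := ultra_ext (T:=nat) (Bd:=setT) (bot:=set0) (cmp:=setC) (fun _ _ _ _ => I) hkey (fun _ _ => I) fF0.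
exists U; split => //; split => // S; exact: dich.
Qed.
Section UltraFacts.
Variable X : riesz.
Implicit Types (U : stone X) (P Q : set X).

Lemma u_band U P : sval U P -> is_band P.
Proof. by case: U => U hU /=; case: hU => h _ /h. Qed.
Lemma u_T U : sval U setT.
Proof. by case: U => U hU /=; case: hU => _ [h _]. Qed.
Lemma u_not0 U : ~ sval U [set 0].
Proof. by case: U => U hU /=; case: hU => _ [_ [h _]]. Qed.
Lemma u_cap U P Q : sval U P -> sval U Q -> sval U (P `&` Q).
Proof. by case: U => U hU /=; case: hU => [_ [_ [_ [h _]]]]; apply: h. Qed.
Lemma u_up U P Q : sval U P -> is_band Q -> P `<=` Q -> sval U Q.
Proof. by case: U => U hU /=; case: hU => [_ [_ [_ [_ [h _]]]]]; apply: h. Qed.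
Lemma u_dich U P : is_band P -> sval U P \/ sval U (dcompl P).
Proof. by case: U => U hU /=; case: hU => [_ [_ [_ [_ [_ h]]]]]; apply: h. Qed.
Lemma u_disj U P Q : sval U P -> sval U Q -> P `&` Q `<=` [set 0] -> False.
Proof.
move=> hP hQ h; apply: (u_not0 (U := U)); apply: u_up (u_cap hP hQ) _ h.
exact: band_set0.
Qed.
Lemma u_excl U P : sval U P -> ~ sval U (dcompl P).
Proof. by move=> hP hd; apply: u_disj hP hd (@cap_dcompl X P). Qed.
End UltraFacts.

Section Topo.
Variables E F : riesz.
Local Notation pt := (stone E * stone F)%type.

Definition rect (P : set E) (Q : set F) : set pt :=
  fun p => sval p.1 P /\ sval p.2 Q.

Lemma open_rect P Q : is_band P -> is_band Q -> prod_open (rect P Q).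
Proof. by move=> bP bQ p [h1 h2]; exists P, Q; do 4!(split => //). Qed.

Lemma open_rectC P Q : is_band P -> is_band Q -> prod_open (~` rect P Q).
Proof.
move=> bP bQ p np.
have [n1|n2] : ~ sval p.1 P \/ ~ sval p.2 Q.
  by apply/not_andP => h; apply: np; case: h.
- have h1 : sval p.1 (dcompl P).
    by move: (u_dich p.1 bP) => [h|h] //; exfalso; apply: n1.
  exists (dcompl P), setT; split; first exact: band_dcompl.
  split; first exact: band_setT.
  split => //; split; first exact: u_T.
  by move=> q hq _ [hq' _]; apply: (u_excl hq' hq).
- have h2 : sval p.2 (dcompl Q).
    by move: (u_dich p.2 bQ) => [h|h] //; exfalso; apply: n2.
  exists setT, (dcompl Q); split; first exact: band_setT.
  split; first exact: band_dcompl.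
  split; first exact: u_T.
  split => //.
  by move=> q _ hq [_ hq']; apply: (u_excl hq' hq).
Qed.

Lemma clopen_rect P Q : is_band P -> is_band Q -> prod_clopen (rect P Q).
Proof. by move=> bP bQ; split; [apply: open_rect|apply: open_rectC]. Qed.

Lemma open_setI (W1 W2 : set pt) : prod_open W1 -> prod_open W2 -> prod_open (W1 `&` W2).
Proof.
move=> o1 o2 p [p1 p2].
have [A1 [B1 [bA1 [bB1 [hA1 [hB1 h1]]]]]] := o1 p p1.
have [A2 [B2 [bA2 [bB2 [hA2 [hB2 h2]]]]]] := o2 p p2.
exists (A1 `&` A2), (B1 `&` B2); split; first exact: band_setI.
split; first exact: band_setI.
split; first exact: u_cap.
split; first exact: u_cap.
move=> q q1 q2; split.
  by apply: h1; [apply: u_up q1 bA1 (@subIsetl _ _ _)|apply: u_up q2 bB1 (@subIsetl _ _ _)].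
by apply: h2; [apply: u_up q1 bA2 (@subIsetr _ _ _)|apply: u_up q2 bB2 (@subIsetr _ _ _)].
Qed.

Lemma open_setU (W1 W2 : set pt) : prod_open W1 -> prod_open W2 -> prod_open (W1 `|` W2).
Proof.
move=> o1 o2 p [p1|p2].
  have [A [B [bA [bB [hA [hB h]]]]]] := o1 p p1.
  by exists A, B; do 4!split => //; move=> q q1 q2; left; apply: h.
have [A [B [bA [bB [hA [hB h]]]]]] := o2 p p2.
by exists A, B; do 4!split => //; move=> q q1 q2; right; apply: h.
Qed.

Lemma clopen_setI (W1 W2 : set pt) : prod_clopen W1 -> prod_clopen W2 -> prod_clopen (W1 `&` W2).
Proof.
move=> [o1 c1] [o2 c2]; split; first exact: open_setI.
by rewrite setCI; apply: open_setU.
Qed.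

Lemma clopen_setC (W : set pt) : prod_clopen W -> prod_clopen (~` W).
Proof. by move=> [o c]; split => //; rewrite setCK. Qed.
End Topo.
Section Main.
Variables E F : riesz.
Local Notation pt := (stone E * stone F)%type.

Lemma lub_from_iso (G : riesz) (f : set pt -> set G) : boolean_iso f ->
  forall Fam : set (set pt), Fam `<=` @prod_clopen E F ->
  exists C, prod_clopen C /\ (forall W, Fam W -> W `<=` C) /\
    (forall C', prod_clopen C' -> (forall W, Fam W -> W `<=` C') -> C `<=` C').
Proof.
move=> [fb [fs [fi [fI _]]]] Fam hFam.
have mono1 : forall W1 W2, prod_clopen W1 -> prod_clopen W2 -> W1 `<=` W2 -> f W1 `<=` f W2.
  move=> W1 W2 c1 c2 h; rewrite -(setIidl h) fI //; exact: subIsetr.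
have mono2 : forall W1 W2, prod_clopen W1 -> prod_clopen W2 -> f W1 `<=` f W2 -> W1 `<=` W2.
  move=> W1 W2 c1 c2 h.
  have e : W1 `&` W2 = W1 by apply: fi => //; [apply: clopen_setI|rewrite fI //; exact: setIidl].
  by rewrite -e; apply: subIsetr.
pose B := fun x => forall X, (is_band X /\ forall W, Fam W -> f W `<=` X) -> X x.
have bB : is_band B by apply: band_bigcap => X [].
have [C [cC eC]] := fs B bB.
exists C; split => //; split.
  move=> W FW; apply: mono2 => //; first exact: hFam.
  by rewrite eC => x fx X [_ hX]; apply: hX FW x fx.
move=> C' cC' hC'; apply: mono2 => //; rewrite eC => x Bx.
apply: Bx; split; first exact: fb.
by move=> W FW; apply: mono1 => //; [apply: hFam|apply: hC'].
Qed.

Definition filtU (UU : set (set nat)) :=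
  isfilt setT set0 UU /\ (forall S : set nat, (exists N, forall n, leq N n -> S n) -> UU S) /\
  forall S, UU S \/ UU (~` S).

Lemma filtU_ne UU S : filtU UU -> UU S -> exists n, S n.
Proof.
move=> [[_ [_ [h0 [_ up]]]] _] US; apply: contrapT => ne; apply: h0.
apply: up US I _ => n Sn; apply: ne; by exists n.
Qed.

Lemma lim_ultra (X : riesz) (UU : set (set nat)) (Us : nat -> stone X) :
  filtU UU -> is_ultra (fun P => UU [set n | sval (Us n) P]).
Proof.
move=> hU; have hU' := hU; case: hU' => [[_ [UT [U0 [UI Uup]]]] [_ dich]].
split.
  move=> P /(filtU_ne hU) [n hn]; exact: u_band hn.
split; first by apply: Uup UT I _ => n _; apply: u_T.
split; first by move=> /(filtU_ne hU) [n hn]; apply: (u_not0 hn).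
split.
  move=> P Q h1 h2; apply: Uup (UI _ _ h1 h2) I _ => n [a b]; exact: u_cap.
split.
  move=> P Q h bQ PQ; apply: Uup h I _ => n hn; exact: u_up hn bQ PQ.
move=> P bP; case: (dich [set n | sval (Us n) P]) => h; [left => //|right].
apply: Uup h I _ => n hn /=; by move: (u_dich (Us n) bP) => [h'|h'].
Qed.

Lemma not_complete (A : nat -> set E) (B : nat -> set F) :
  (forall n, is_band (A n)) -> (forall n, exists x, A n x /\ x <> 0) ->
  (forall n m, n <> m -> A n `&` A m `<=` [set 0]) ->
  (forall n, is_band (B n)) -> (forall n, exists x, B n x /\ x <> 0) ->
  (forall n m, n <> m -> B n `&` B m `<=` [set 0]) ->
  forall C, prod_clopen C -> (forall n, rect (A n) (B n) `<=` C) ->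
  ~ (forall C', prod_clopen C' -> (forall n, rect (A n) (B n) `<=` C') -> C `<=` C').
Proof.
move=> bA nA dA bB nB dB C cC RC lubC.
have /choice [Us hUs] : forall n, exists U : stone E, sval U (A n).
  by move=> n; apply: exists_ultra.
have /choice [Vs hVs] : forall n, exists V : stone F, sval V (B n).
  by move=> n; apply: exists_ultra.
have [UU hUU] := nat_ultra.
have fU : filtU UU by [].
case: hUU => [[_ [UT [U0 [UI Uup]]]] [cof dich]].
pose p0 : pt := (exist _ _ (lim_ultra Us fU), exist _ _ (lim_ultra Vs fU)).
have p0C : C p0.
  apply: contrapT => np.
  have [P [Q [bP [bQ [hP [hQ h]]]]]] := cC.2 p0 np.
  have [n [h1 h2]] := filtU_ne fU (UI _ _ hP hQ).
  have : C (Us n, Vs n) by apply: (RC n); split; [exact: hUs|exact: hVs].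
  exact: (h (Us n, Vs n) h1 h2).
have [P [Q [bP [bQ [hP [hQ h]]]]]] := cC.1 p0 p0C.
have SU := UI _ _ hP hQ.
have [n [h1 h2]] := filtU_ne fU SU.
have [m [[m1 m2] mn]] : exists m, ([set k | sval (Us k) P] `&` [set k | sval (Vs k) Q]
    `&` ~` [set n]) m.
  apply: (filtU_ne fU); apply: UI => //; apply: cof; exists n.+1 => k hk e.
  by move: hk; rewrite e ltnn.
have qC : C (Us n, Vs m) by apply: h.
pose K := rect (P `&` A n) (Q `&` B m).
have cK : prod_clopen K by apply: clopen_rect; apply: band_setI.
have qK : K (Us n, Vs m) by split; apply: u_cap; [exact: h1|exact: hUs|exact: m2|exact: hVs].
have : C `<=` C `&` ~` K.
  apply: lubC; first by apply: clopen_setI => //; apply: clopen_setC.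
  move=> k r rk; split; first exact: (RC k r rk).
  move=> [r1 r2]; case: rk => rk1 rk2.
  have ra : sval r.1 (A n) := u_up r1 (bA n) (@subIsetr _ _ _).
  have rb : sval r.2 (B m) := u_up r2 (bB m) (@subIsetr _ _ _).
  have [ek|nk] := pselect (k = n).
    rewrite ek in rk2; apply: (u_disj rk2 rb); apply: dB => e; apply: mn; by rewrite e.
  apply: (u_disj rk1 ra); exact: dA.
by move=> /(_ _ qC) [_].
Qed.
End Main.
Section Lists.
Variable E : riesz.
Implicit Types (a c x y : set E) (s t : seq (set E)).

Fixpoint allL (p : set E -> Prop) s : Prop :=
  if s is x :: t then p x /\ allL p t else True.
Fixpoint pwL s : Prop :=
  if s is x :: t then allL (fun y => x `&` y `<=` [set 0]) t /\ pwL t else True.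
Fixpoint unL s : set E := if s is x :: t then x `|` unL t else set0.
Definition nz x := exists w, x w /\ w <> 0.
Definition goodL a s := allL (fun x => is_band x /\ nz x /\ x `<=` a) s /\ pwL s.
Definition FamB a N := exists s, leq N (size s) /\ goodL a s.
Definition infB a := forall N, FamB a N.

Lemma allL_mono (p q : set E -> Prop) s : (forall x, p x -> q x) -> allL p s -> allL q s.
Proof. by move=> h; elim: s => //= x t IH [px pt]; split; [apply: h|apply: IH]. Qed.

Lemma disj_un x t : allL (fun y => x `&` y `<=` [set 0]) t -> x `&` unL t `<=` [set 0].
Proof.
elim: t => [_ w [_ []]|y t IH /= [hy ht]] w [xw [yw|tw]]; first by apply: hy.
by apply: IH.
Qed.

Lemma goodL_split a c s : is_band c -> goodL a s -> exists s1 s2,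
  goodL (a `&` c) s1 /\ goodL (a `&` dcompl c) s2 /\
  allL (fun z => z `<=` unL s) s1 /\ allL (fun z => z `<=` unL s) s2 /\
  leq (size s) (size s1 + size s2).
Proof.
move=> bc; elim: s => [_|x t IH [[[bx [nzx xa]] ht] [dxt pwt]]].
  by exists [::], [::].
have [s1 [s2 [[g1 p1] [[g2 p2] [u1 [u2 sz]]]]]] := IH (conj ht pwt).
have sub : forall z, z `<=` unL t -> z `<=` unL (x :: t) by move=> z h w /h; right.
have [nzc|nnzc] := pselect (nz (x `&` c)).
  exists ((x `&` c) :: s1), s2; split.
    split; first split => //.
      split; first exact: band_setI.
      by split => // w [xw cw]; split => //; apply: xa.
    split => //; apply: allL_mono u1 => z zt w [[xw _] zw].
    by apply: (disj_un dxt); split => //; apply: zt.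
  split; first by split.
  split; first by split; [move=> w [xw _]; left|apply: allL_mono u1].
  split; first exact: allL_mono u2.
  by rewrite /= addSn ltnS.
have xd : x `<=` dcompl c.
  apply: band_key => // w hw; apply: contrapT => nw; apply: nnzc; by exists w.
exists s1, (x :: s2); split; first by split.
split.
  split; first split => //.
    by split => //; split => //; move=> w xw; split; [apply: xa|apply: xd].
  split => //; apply: allL_mono u2 => z zt w [xw zw].
  by apply: (disj_un dxt); split => //; apply: zt.
split; first exact: allL_mono u1.
split; first by split; [move=> w xw; left|apply: allL_mono u2].
by rewrite /= addnS ltnS.
Qed.

Lemma infB_split a c : is_band c -> infB a -> infB (a `&` c) \/ infB (a `&` dcompl c).
Proof.
move=> bc ia; apply: contrapT => /not_orP [n1 n2].
have [N1 h1] : exists N, ~ FamB (a `&` c) N by apply: contrapT => h; apply: n1 => N;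
  apply: contrapT => hN; apply: h; exists N.
have [N2 h2] : exists N, ~ FamB (a `&` dcompl c) N by apply: contrapT => h; apply: n2 => N;
  apply: contrapT => hN; apply: h; exists N.
have [s [hs gs]] := ia (N1 + N2)%N.
have [s1 [s2 [g1 [g2 [_ [_ sz]]]]]] := goodL_split bc gs.
have [l1|l1] := boolP (leq N1 (size s1)).
  by apply: h1; exists s1.
by apply: h2; exists s2; split => //; lia.
Qed.

Lemma infB_step a : is_band a -> infB a -> exists x y, is_band x /\ nz x /\ x `<=` a /\
  is_band y /\ infB y /\ y `<=` a /\ x `&` y `<=` [set 0].
Proof.
move=> ba ia; have [[|x1 [|x2 s]] [//= hs gs]] := ia 2%N.
case: gs => [/= [[b1 [nz1 s1]] [[b2 [nz2 s2]] _]] [[d12 _] _]].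
have x2d : x2 `<=` dcompl x1.
  by apply: band_key => // w [h2 h1]; apply: d12.
have bp : is_band (a `&` x1) by apply: band_setI.
have bq : is_band (a `&` dcompl x1) by apply: band_setI => //; apply: band_dcompl.
have nzp : nz (a `&` x1) by case: nz1 => w [xw w0]; exists w; split => //; split => //; apply: s1.
have nzq : nz (a `&` dcompl x1).
  by case: nz2 => w [xw w0]; exists w; split => //; split; [apply: s2|apply: x2d].
have dpq : forall P Q, (P = a `&` x1 /\ Q = a `&` dcompl x1) \/ (Q = a `&` x1 /\ P = a `&` dcompl x1) ->
    P `&` Q `<=` [set 0].
  move=> P Q [[-> ->]|[-> ->]] w [[_ h1] [_ h2]]; apply: (@cap_dcompl _ x1); split => //.
have [ip|iq] := infB_split b1 ia.
  exists (a `&` dcompl x1), (a `&` x1); do 6!(split => //; try exact: subIsetl).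
  by apply: dpq; right.
exists (a `&` x1), (a `&` dcompl x1); do 6!(split => //; try exact: subIsetl).
by apply: dpq; left.
Qed.
End Lists.
Section Seq.
Variable E : riesz.

Lemma seq_of_infB : infB (@setT E) ->
  exists A : nat -> set E, (forall n, is_band (A n)) /\ (forall n, exists x, A n x /\ x <> 0) /\
  (forall n m, n <> m -> A n `&` A m `<=` [set 0]).
Proof.
move=> iT.
have /choice [g hg] : forall a : set E, exists xy : set E * set E, is_band a -> infB a ->
    is_band xy.1 /\ nz xy.1 /\ xy.1 `<=` a /\ is_band xy.2 /\ infB xy.2 /\ xy.2 `<=` a /\
    xy.1 `&` xy.2 `<=` [set 0].
  move=> a; have [[ba ia]|nh] := pselect (is_band a /\ infB a).
    have [x [y h]] := infB_step ba ia; by exists (x, y).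
  by exists (setT, setT) => ba ia; exfalso; apply: nh.
pose a_ := fun n => iter n (fun a => (g a).2) setT.
have inv : forall n, is_band (a_ n) /\ infB (a_ n).
  elim=> [|n [bn ibn]]; first by split => //; apply: band_setT.
  have := hg _ bn ibn; rewrite /a_ /= => - [_ [_ [_ [h1 [h2 _]]]]]; by split.
have anti : forall n k, a_ (addn n k) `<=` a_ n.
  move=> n; elim=> [|k IH]; first by rewrite addn0.
  rewrite addnS; have [bk ik] := inv (addn n k).
  have := hg _ bk ik => - [_ [_ [_ [_ [_ [h _]]]]]].
  by apply: subset_trans IH; apply: h.
exists (fun n => (g (a_ n)).1); split.
  by move=> n; have [bn ibn] := inv n; case: (hg _ bn ibn).
split.
  by move=> n; have [bn ibn] := inv n; case: (hg _ bn ibn) => _ [].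
have lt : forall n m, leq n.+1 m -> (g (a_ n)).1 `&` (g (a_ m)).1 `<=` [set 0].
  move=> n m nm; have [bn ibn] := inv n; have [bm ibm] := inv m.
  case: (hg _ bn ibn) => _ [_ [_ [_ [_ [_ d]]]]].
  case: (hg _ bm ibm) => _ [_ [sm _]].
  move=> w [w1 w2]; apply: d; split => //.
  have e : m = (addn n.+1 (subn m n.+1)) by rewrite subnKC.
  have := anti n.+1 (subn m n.+1); rewrite -e /a_ /= => h; apply: h; exact: sm.
move=> n m nm; have [l|l] := ltnP n m; first exact: lt.
have l' : leq m.+1 n by lia.
by rewrite setIC; apply: lt.
Qed.

Definition FamEl (N : nat) := exists u : nat -> E, (forall i, leq i.+1 N -> u i <> 0) /\
  (forall i k, leq i.+1 N -> leq k.+1 N -> i <> k -> rdisj (u i) (u k)).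

Lemma allL_iota (P : set E -> Prop) (f : nat -> set E) m n :
  (forall i, leq m i -> leq i.+1 (addn m n) -> P (f i)) -> allL P (map f (iota m n)).
Proof.
elim: n m => [//|n IH] m h /=; split; first by apply: h; rewrite ?leqnn ?addnS ?ltnS ?leq_addr.
apply: IH => i hi1 hi2; apply: h; first by apply: ltnW.
by rewrite addnS -addSn.
Qed.

Lemma pwL_iota (f : nat -> set E) m n :
  (forall i k, leq m i -> leq i.+1 (addn m n) -> leq m k -> leq k.+1 (addn m n) -> i <> k ->
    f i `&` f k `<=` [set 0]) -> pwL (map f (iota m n)).
Proof.
elim: n m => [//|n IH] m h /=; split.
  apply: allL_iota => i hi1 hi2; apply: h => //; try lia.
apply: IH => i k h1 h2 h3 h4 ne; apply: h => //; lia.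
Qed.

Lemma infB_of_FamEl : (forall N, FamEl N) -> infB (@setT E).
Proof.
move=> hF N; have [u [nz0 du]] := hF N.
exists (map (fun i => pband (u i)) (iota 0 N)); split.
  by rewrite size_map size_iota.
split.
  apply: allL_iota => i _ hi; split; first exact: pband_band.
  by split => //; exists (u i); split; [apply: pband_in|apply: nz0].
apply: pwL_iota => i k _ hi _ hk ne; exact: pband_disj (du _ _ hi hk ne).
Qed.
End Seq.
Lemma rlt_absurd1 (l a : R) : 0 < a -> l + a <= l -> False.
Proof. move=> h1 h2; lra. Qed.
Lemma rlt_absurd2 (l a : R) : 0 < a -> l <= l - a -> False.
Proof. move=> h1 h2; lra. Qed.

Section DimHelpers.
Variable E : riesz.
Implicit Types x y z u v w : E.
Local Notation "x <=: y" := (@rle E x y) (at level 70).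

Lemma pos_sub x : pos x - pos (- x) = x.
Proof.
have e : pos (- x) = - rmeet x 0 by rewrite /rmeet /pos opprK oppr0.
by rewrite e opprK join_meet addr0.
Qed.

Lemma pos_neg_disj x : rmeet (pos x) (pos (- x)) = 0.
Proof.
have := sub_meet (pos x) (pos (- x)); rewrite pos_sub => h.
have : pos x - rmeet (pos x) (pos (- x)) = pos x - 0 by rewrite h subr0.
by move/addrI/oppr_inj.
Qed.

Lemma coef_le u (a b : R) : 0 <=: u -> u <> 0 -> a *: u <=: b *: u -> a <= b.
Proof.
move=> u0 un h; rewrite leNgt; apply/negP => ba; apply: un.
have hd : 0 < a - b by rewrite subr_gt0.
have := le_subr0 h; rewrite -scalerBl => h2.
have hi : 0 <= (a - b)^-1 by rewrite invr_ge0 ltW.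
have h3 := le_scale hi h2.
rewrite scaler0 scalerA mulrC -opprB mulNr mulfV ?gt_eqF // scaleN1r in h3.
apply: rle_anti => //; by apply: le_oppE; rewrite oppr0.
Qed.

Lemma coef_mono u (a b : R) : 0 <=: u -> a <= b -> a *: u <=: b *: u.
Proof.
move=> u0 ab; apply: le_subr0E; rewrite -scalerBl; apply: scale_ge0 => //.
by rewrite subr_ge0.
Qed.

Lemma disj_opp x w : rdisj x w -> rdisj (- x) w.
Proof. by move=> h; rewrite -scaleN1r; apply: disj_scale. Qed.
End DimHelpers.

Lemma helper_k (c : R) (k : nat) : ~ (c + 1 <= k.+1%:R) -> k%:R <= c.
Proof. move=> h; rewrite leNgt; apply/negP => h2; apply: h; rewrite -natr1; lra. Qed.
Lemma helper_nc (c : R) (n : nat) : c + 1 <= n%:R -> 1 <= n%:R - c.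
Proof. move=> h; lra. Qed.
Section Dim.
Variable E : riesz.
Local Notation "x <=: y" := (@rle E x y) (at level 70).
Variable j : nat.
Variable u : nat -> E.
Hypothesis upos : forall i, 0 <=: u i.
Hypothesis unz : forall i, leq i.+1 j -> u i <> 0.
Hypothesis udisj : forall i k, leq i.+1 j -> leq k.+1 j -> i <> k -> rdisj (u i) (u k).
Hypothesis hA : archimedean E.
Hypothesis H : ~ FamEl E j.+1.

Lemma ext w : w <> 0 -> (forall k, leq k.+1 j -> rdisj w (u k)) -> False.
Proof.
move=> w0 hw; apply: H.
pose v := fun k => if k == j then w else u k.
have vj : v j = w by rewrite /v eqxx.
have vo : forall k, k <> j -> v k = u k by move=> k /eqP nk; rewrite /v (negbTE nk).
exists v; split.
  move=> a ha; have [->|na] := pselect (a = j); first by rewrite vj.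
  rewrite vo //; apply: unz; lia.
move=> a b ha hb ab.
have [ea|na] := pselect (a = j); have [eb|nb] := pselect (b = j).
- by exfalso; apply: ab; rewrite ea eb.
- by rewrite ea vj vo //; apply: hw; lia.
- by rewrite eb vj vo //; apply: rdisjC; apply: hw; lia.
- by rewrite !vo //; apply: udisj => //; lia.
Qed.

Lemma ext2 i w1 w2 : leq i.+1 j -> w1 <> 0 -> w2 <> 0 -> rdisj w1 w2 ->
  (forall k, leq k.+1 j -> k <> i -> rdisj w1 (u k) /\ rdisj w2 (u k)) -> False.
Proof.
move=> hi n1 n2 d12 hw; apply: H.
pose v := fun k => if k == i then w1 else if k == j then w2 else u k.
have vi : v i = w1 by rewrite /v eqxx.
have vj : v j = w2.
  have ij : (j == i) = false by apply/eqP; lia.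
  by rewrite /v ij eqxx.
have vo : forall k, k <> i -> k <> j -> v k = u k.
  by move=> k /eqP ki /eqP kj; rewrite /v (negbTE ki) (negbTE kj).
exists v; split.
  move=> a ha; have [->|na] := pselect (a = i); first by rewrite vi.
  have [->|nb] := pselect (a = j); first by rewrite vj.
  rewrite vo //; apply: unz; lia.
move=> a b ha hb ab.
have [ea|na] := pselect (a = i).
  rewrite ea vi; have [eb|nb] := pselect (b = j); first by rewrite eb vj.
  rewrite vo //; last by move=> e; apply: ab; rewrite ea e.
  by case: (hw b) => //; [lia|move=> e; apply: ab; rewrite ea e].
have [ea'|na'] := pselect (a = j).
  rewrite ea' vj; have [eb|nb] := pselect (b = i); first by rewrite eb vi; apply: rdisjC.
  rewrite vo //; last by move=> e; apply: ab; rewrite ea' e.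
  by case: (hw b) => //; lia.
rewrite (vo a) //.
have [eb|nb] := pselect (b = i).
  by rewrite eb vi; apply: rdisjC; case: (hw a) => //; lia.
have [eb'|nb'] := pselect (b = j).
  by rewrite eb' vj; apply: rdisjC; case: (hw a) => //; lia.
by rewrite vo //; apply: udisj => //; lia.
Qed.

Definition Di i x := forall k, leq k.+1 j -> k <> i -> rdisj x (u k).

Lemma Di_add i x y : Di i x -> Di i y -> Di i (x + y).
Proof. by move=> hx hy k hk ne; apply: disj_add; [apply: hx|apply: hy]. Qed.
Lemma Di_scale i (a : R) x : Di i x -> Di i (a *: x).
Proof. by move=> hx k hk ne; apply: disj_scale; apply: hx. Qed.
Lemma Di_u i : leq i.+1 j -> Di i (u i).
Proof. by move=> hi k hk ne; apply: udisj => // e; apply: ne. Qed.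
Lemma Di_solid i x y : Di i y -> rle (rabs x) (rabs y) -> Di i x.
Proof. by move=> hy hxy k hk ne; apply: disj_solid hxy _; apply: hy. Qed.

Lemma tot i x : leq i.+1 j -> Di i x -> 0 <=: x \/ x <=: 0.
Proof.
move=> hi hx; apply: contrapT => /not_orP [n1 n2].
apply: (ext2 (w1 := pos x) (w2 := pos (- x)) hi).
- by move=> e; apply: n2; rewrite -e; apply: pos_gex.
- move=> e; apply: n1; apply: le_oppE; rewrite oppr0 -e; exact: pos_gex.
- by rewrite /rdisj (abs_pos (pos_ge0 x)) (abs_pos (pos_ge0 (- x))); exact: pos_neg_disj.
- have dpx : Di i (pos x).
    by apply: (Di_solid (y:=x)) => //; rewrite (abs_pos (pos_ge0 x)); exact: pos_le_abs.
  have dnx : Di i (pos (- x)).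
    apply: (Di_solid (y:=x)) => //; rewrite (abs_pos (pos_ge0 _)) -abs_opp.
    exact: pos_le_abs.
  by move=> k hk ne; split; [apply: dpx|apply: dnx].
Qed.

Lemma arch_big i w : leq i.+1 j -> Di i w -> 0 <=: w -> w <> 0 ->
  exists k : nat, k <> 0%N /\ u i <=: k%:R *: w.
Proof.
move=> hi hw w0 wn.
have [k nk] : exists k : nat, ~ (k%:R *: w <=: u i).
  apply: contrapT => h; apply: wn; apply: (@hA w (u i) w0) => n.
  by apply: contrapT => hn; apply: h; exists n.
have hD : Di i (k%:R *: w - u i).
  by apply: Di_add; [apply: Di_scale|rewrite -scaleN1r; apply: Di_scale; apply: Di_u].
case: (tot hi hD) => h.
  exists k; split; last exact: le_subr0E.
  move=> k0; apply: (unz hi); apply: rle_anti; last exact: upos.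
  by move: (le_subr0E h); rewrite k0 scale0r.
exfalso; apply: nk; have := le_addr (u i) h; by rewrite subrK add0r.
Qed.

Lemma hold i y (n : R) : leq i.+1 j -> Di i y -> 0 <=: y -> y <=: n *: u i ->
  exists c : R, y = c *: u i.
Proof.
move=> hi hy y0 yn.
pose S := [set t : R | t *: u i <=: y].
have S0 : S 0 by rewrite /S /= scale0r.
have Sn : ubound S n.
  move=> t St; apply: (coef_le (upos i) (unz hi)); exact: le_tr St yn.
have hs : has_sup S by split; [exists 0|exists n].
have ub := sup_upper_bound hs.
set l := sup S in ub *.
have hw : Di i (y - l *: u i).
  by apply: Di_add => //; rewrite -scaleNr; apply: Di_scale; apply: Di_u.
have kpos : forall k : nat, k <> 0%N -> 0 < (k%:R : R)^-1.
  by move=> k k0; rewrite invr_gt0 ltr0n lt0n; apply/eqP.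
have kinv : forall (k : nat) (x : E), k <> 0%N -> (k%:R : R)^-1 *: (k%:R *: x) = x.
  by move=> k x k0; rewrite scalerA mulVf ?scale1r // pnatr_eq0; apply/eqP.
exists l; apply/eqP; rewrite -subr_eq0; apply/eqP.
case: (tot hi hw) => h.
  apply: contrapT => wn; have [k [k0 hk]] := arch_big hi hw h wn.
  have h2 := le_scale (ltW (kpos k k0)) hk; rewrite kinv // in h2.
  have : S (l + (k%:R)^-1).
    rewrite /S /= scalerDl; have := le_addl (l *: u i) h2; by rewrite addrCA subrr addr0.
  move/ub => hh; exact: (rlt_absurd1 (kpos k k0) hh).
apply: contrapT => wn.
have hw' : Di i (- (y - l *: u i)) by rewrite -scaleN1r; apply: Di_scale.
have h' : 0 <=: - (y - l *: u i) by rewrite -oppr0; apply: le_opp.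
have wn' : - (y - l *: u i) <> 0 by move=> e; apply: wn; rewrite -[LHS]opprK e oppr0.
have [k [k0 hk]] := arch_big hi hw' h' wn'.
have h2 := le_scale (ltW (kpos k k0)) hk; rewrite kinv // in h2.
have h3 : y <=: (l - (k%:R)^-1) *: u i.
  rewrite scalerBl; have := le_addl (y - (k%:R)^-1 *: u i) h2.
  have e : forall a b : E, y - a - (y - b) = b - a.
    by move=> a b; rewrite opprB addrC addrA subrK.
  by rewrite subrK e.
have : ubound S (l - (k%:R)^-1).
  move=> t St; apply: (coef_le (upos i) (unz hi)); exact: le_tr St h3.
move/(ge_sup (ex_intro _ 0 S0)); rewrite -/l.
move=> hh; exact: (rlt_absurd2 (kpos k k0) hh).
Qed.

Lemma proj i z : leq i.+1 j -> 0 <=: z -> exists c : R, rdisj (z - c *: u i) (u i).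
Proof.
move=> hi z0.
have nu0 : forall n : nat, 0 <=: n%:R *: u i by move=> n; apply: scale_ge0 => //; apply: upos.
have yD : forall n : nat, Di i (rmeet z (n%:R *: u i)) /\ 0 <=: rmeet z (n%:R *: u i) /\
    rmeet z (n%:R *: u i) <=: n%:R *: u i.
  move=> n; have m0 : 0 <=: rmeet z (n%:R *: u i) by apply: meet_ge0.
  split; last by split => //; apply: meet_ler.
  apply: (Di_solid (y := n%:R *: u i)); first by apply: Di_scale; apply: Di_u.
  by rewrite (abs_pos m0) (abs_pos (nu0 n)); apply: meet_ler.
have /choice [cn hcn] : forall n : nat, exists c : R, rmeet z (n%:R *: u i) = c *: u i.
  by move=> n; case: (yD n) => [h1 [h2 h3]]; apply: (hold hi h1 h2 h3).
have [n hn] : exists n : nat, cn n + 1 <= n%:R.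
  apply: contrapT => hno; apply: (unz hi); apply: (@hA (u i) z (upos i)) => k.
  have hk : k%:R <= cn k.+1 by apply: helper_k => h; apply: hno; exists k.+1.
  apply: (le_tr (y := cn k.+1 *: u i)); first exact: coef_mono.
  rewrite -hcn; exact: meet_lel.
exists (cn n).
have cz : cn n *: u i <=: z by rewrite -hcn; apply: meet_lel.
have dz := le_subr0 cz.
have e1 : rmeet (z - cn n *: u i) ((n%:R - cn n) *: u i) = 0.
  by rewrite scalerBl -meetD hcn subrr.
rewrite /rdisj (abs_pos dz) (abs_pos (upos i)).
apply: rle_anti; last by apply: meet_ge0 => //; apply: upos.
rewrite -e1 meetC [X in _ <=: X]meetC; apply: meet_mono.
rewrite -{1}[u i]scale1r; apply: coef_mono; first exact: upos.
exact: helper_nc.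
Qed.

Lemma span_pos z : 0 <=: z -> exists c : nat -> R, z = \sum_(i < j) c i *: u i.
Proof.
move=> z0.
have /choice [c hc] : forall i : nat, exists c : R, leq i.+1 j -> rdisj (z - c *: u i) (u i).
  move=> i; case: (boolP (leq i.+1 j)) => hi.
    by have [c hc] := proj hi z0; exists c.
  by exists 0.
exists c; apply/eqP; rewrite -subr_eq0; apply/eqP.
apply: contrapT => wn; apply: (ext wn) => k hk.
rewrite (bigD1 (Ordinal hk)) //= opprD addrA.
apply: disj_add; first exact: hc.
apply: disj_opp.
apply: (big_ind (fun x => rdisj x (u k))); first exact: disj0.
  by move=> x y; apply: disj_add.
move=> i ne; apply: disj_scale; apply: (udisj (ltn_ord i) hk).
by move=> e; move/eqP: ne; apply; apply: val_inj.
Qed.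

Lemma span z : exists c : nat -> R, z = \sum_(i < j) c i *: u i.
Proof.
have [c1 e1] := span_pos (pos_ge0 z).
have [c2 e2] := span_pos (pos_ge0 (- z)).
exists (fun i => c1 i - c2 i); rewrite -(pos_sub z) e1 e2 -sumrB.
by apply: eq_bigr => i _; rewrite scalerBl.
Qed.

Lemma dim_contra : infinite_dim E -> False.
Proof.
move=> iE; have [v hv] := iE j.+1.
have /choice [co hco] : forall a : 'I_j.+1, exists c : nat -> R, v a = \sum_(i < j) c i *: u i.
  by move=> a; apply: span.
pose M : 'M[R]_(j.+1, j) := \matrix_(a, i) co a i.
pose K := kermx M.
have rk : \rank K != 0%N.
  by rewrite /K mxrank_ker; have := rank_leq_col M; lia.
have [a [b hab]] : exists a b, K a b <> 0.
  apply: contrapT => hn0; move: rk; rewrite mxrank_eq0 => /eqP kn; apply: kn.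
  apply/matrixP => a b; have e : (0 : 'M[R]_(j.+1)) a b = 0 by rewrite mxE.
  rewrite e; apply: contrapT => hn; apply: hn0; by exists a, b.
pose r := row a K.
have hr : r *m M = 0 by rewrite /r -row_mul mulmx_ker row0.
pose cc := fun a' : 'I_j.+1 => r 0 a'.
have sum0 : \sum_(a' < j.+1) cc a' *: v a' = 0.
  under eq_bigr => a' _ do rewrite hco scaler_sumr.
  rewrite exchange_big /=.
  apply: big1 => i _.
  have -> : \sum_(a' < j.+1) cc a' *: (co a' i *: u i) = (r *m M) 0 i *: u i.
    rewrite mxE scaler_suml; apply: eq_bigr => a' _; by rewrite scalerA /cc [M a' i]mxE.
  by rewrite hr mxE scale0r.
have := hv cc sum0 b; rewrite /cc /r mxE; exact: hab.
Qed.
End Dim.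

Lemma FamEl_all (E : riesz) : archimedean E -> infinite_dim E -> forall N, FamEl E N.
Proof.
move=> hA iE; elim=> [|j [u0 [nz0 d0]]].
  by exists (fun _ => 0); split => i //.
apply: contrapT => H.
apply: (@dim_contra E j (fun i => rabs (u0 i))) => //.
- by move=> i; apply: abs_ge0.
- by move=> i hi /abs_eq0; apply: nz0.
- move=> i k hi hk ne; apply: disj_absE; apply: rdisjC; apply: disj_absE; apply: rdisjC.
  exact: d0.
Qed.

Lemma disj_seq (E : riesz) : archimedean E -> infinite_dim E ->
  exists A : nat -> set E, (forall n, is_band (A n)) /\ (forall n, exists x, A n x /\ x <> 0) /\
  (forall n m, n <> m -> A n `&` A m `<=` [set 0]).
Proof.
move=> hA iE; apply: seq_of_infB; apply: infB_of_FamEl; exact: FamEl_all.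
Qed.
Theorem corollary3p3 (E F : riesz) (hE : archimedean E) (hF : archimedean F)
  (iE : infinite_dim E) (iF : infinite_dim F)
  (G : riesz) (tens : E -> F -> G) (hT : fremlin_tensor tens) :
  ~ exists f : set (stone E * stone F) -> set G, boolean_iso f.
Proof.
move=> [f hf].
have [A [bA [nA dA]]] := disj_seq hE iE.
have [B [bB [nB dB]]] := disj_seq hF iF.
pose Fam := fun W => exists n, W = rect (A n) (B n).
have hFam : Fam `<=` @prod_clopen E F.
  by move=> W [n ->]; apply: clopen_rect.
have [C [cC [ubC lubC]]] := lub_from_iso hf hFam.
apply: (not_complete bA nA dA bB nB dB cC).
  by move=> n; apply: ubC; exists n.
by move=> C' cC' h; apply: lubC => // W [n ->]; apply: h.
Qed.
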